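(* Let $n, t', r$ be positive integers and let $T$ be a $(t'+2r)$-element subset of $[n]$. For any distinct $A, B\in \binom{T}{r+t'}$, setting $w=\left\lfloor\frac{|A \cap B|}{t'}\right\rfloor+1$, there exist $A_1, A_2, \ldots, A_{2w} \in \binom{T}{r+t'}$ such that (1) $|A_i \cap A_{i+1}|=t'$ for $i=1,\ldots, 2w-1$; (2) $A_1=B$ and $A_{2w}=A$.
   Context: $[n]=\{1,\dots,n\}$ and $\binom{D}{k}$ denotes the family of all $k$-element subsets of a finite set $D$. *)

(* Defs.v *)
From mathcomp Require Import all_boot.
Set Implicit Arguments. Unset Strict Implicit. Unset Printing Implicit Defensive.

(* Main.v *)
Require Import Defs.
From mathcomp Require Import all_boot zify.

Lemma exists_sub (U : finType) (S : {set U}) m :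
  m <= #|S| -> exists2 S' : {set U}, S' \subset S & #|S'| = m.
Proof.
elim: m => [|m IH] Hm; first by exists set0; [exact: sub0set | exact: cards0].
have [S' sub cS'] := IH (ltnW Hm).
have : 0 < #|S :\: S'| by rewrite cardsD (setIidPr sub); lia.
case/card_gt0P => x; rewrite inE => /andP [xS' xS].
exists (x |: S'); first by rewrite subUset sub1set xS sub.
by rewrite cardsU1 xS' cS'.
Qed.

Section W.
Variables (n t' r : nat) (T : {set 'I_n}).
Hypothesis HT : #|T| = t' + 2 * r.

Definition good (X : {set 'I_n}) := (X \subset T) && (#|X| == r + t').
Definition walk L X Y := exists As : nat -> {set 'I_n},
  [/\ As 0 = X, As L = Y, forall i, i <= L -> good (As i)
    & forall i, i < L -> As i :|: As i.+1 = T].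

Lemma walk1 X Y : good X -> good Y -> X :|: Y = T -> walk 1 X Y.
Proof.
move=> gX gY XY; exists (fun i => if i == 0 then X else Y); split => //.
  by case=> [|[|]].
by case.
Qed.

Lemma walk_cat L1 L2 X Y Z : walk L1 X Y -> walk L2 Y Z -> walk (L1 + L2) X Z.
Proof.
move=> [As [A0 AL Ag As_]] [Bs [B0 BL Bg Bs_]].
exists (fun i => if i <= L1 then As i else Bs (i - L1)); split.
- by rewrite leq0n.
- rewrite /=; case: ifP => H; last by rewrite addKn.
  have E : L2 = 0 by lia.
  by subst L2; rewrite addn0 AL -BL B0.
- move=> i Hi /=; case: ifP => H; first exact: Ag.
  apply: Bg; lia.
- move=> i Hi /=; case: ifP => H1; case: ifP => H2.
  + exact: As_.
  + have Ei : i = L1 by lia.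
    subst i; rewrite AL -B0; have -> : L1.+1 - L1 = 1 by lia.
    apply: Bs_; lia.
  + lia.
  + have -> : i.+1 - L1 = (i - L1).+1 by lia.
    apply: Bs_; lia.
Qed.

Lemma walk_pad L X Y : walk L.+1 X Y -> walk L.+3 X Y.
Proof.
move=> [As [A0 AL Ag As_]].
exists (fun i => if i < 2 then As i else As (i - 2)); split => //.
- move=> i Hi /=; case: ifP => H; apply: Ag; lia.
- case=> [|[|i]] Hi /=.
  + exact: As_.
  + rewrite setUC; exact: As_.
  + rewrite !subSS subn0; apply: As_; lia.
Qed.

Lemma walk2 X Z : good X -> good Z -> r <= #|X :&: Z| -> walk 2 X Z.
Proof.
move=> gX gZ Hr.
have [W sW cW] := @exists_sub _ (X :&: Z) _ Hr.
have WX : W \subset X by apply: (subset_trans sW); exact: subsetIl.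
have WZ : W \subset Z by apply: (subset_trans sW); exact: subsetIr.
have /andP[XT _] := gX; have /andP[ZT _] := gZ.
have WT : W \subset T by apply: subset_trans XT.
have gY : good (T :\: W).
  by rewrite /good subsetDl cardsD (setIidPr WT) HT cW; apply/eqP; lia.
have cov : forall V : {set 'I_n}, W \subset V -> V \subset T -> V :|: (T :\: W) = T.
  move=> V WV VT; apply/eqP; rewrite eqEsubset subUset VT subsetDl /=.
  apply/subsetP => x xT; rewrite !inE xT andbT.
  case: (boolP (x \in W)) => xW //=; last by rewrite orbT.
  by rewrite (subsetP WV).
apply: (@walk_cat 1 1 _ (T :\: W)); apply: walk1 => //.
- exact: cov.
- rewrite setUC; exact: cov.
Qed.

Variable A : {set 'I_n}.
Hypothesis gA : good A.

Lemma reach j X : good X -> #|(T :\: A) :\: X| <= j * t' -> walk (2 * j + 1) X A.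
Proof.
have /andP[AT /eqP cA] := gA.
elim: j X => [|j IH] X gX Hd.
  apply: walk1 => //.
  have : (T :\: A) :\: X == set0 by rewrite -cards_eq0; lia.
  move/eqP=> E; apply/eqP; rewrite eqEsubset subUset AT andbT.
  have /andP[-> _] := gX; rewrite /=.
  apply/subsetP => x xT; rewrite inE; case xX: (x \in X) => //=.
  apply/negPn/negP => xA.
  have : x \in (T :\: A) :\: X by rewrite !inE xX xA xT.
  by rewrite E inE.
have [Hle|Hgt] := leqP #|(T :\: A) :\: X| (j * t').
  have -> : 2 * j.+1 + 1 = (2 * j).+3 by lia.
  apply: walk_pad; rewrite -addn1; exact: IH.
have /andP[XT /eqP cX] := gX.
set D := (T :\: A) :\: X in Hd Hgt.
have [D' sD' cD'] := @exists_sub _ D (#|D| - j * t') (leq_subr _ _).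
have cXA : t' <= #|X :&: A|.
  have := cardsUI X A; have : #|X :|: A| <= #|T|.
    by apply: subset_leq_card; rewrite subUset XT AT.
  lia.
have [E sE cE] := @exists_sub _ (X :&: A) #|D'| ltac:(lia).
have EX : E \subset X by apply: (subset_trans sE); exact: subsetIl.
have DX : [disjoint D' & X].
  rewrite disjoint_subset; apply: (subset_trans sD'); apply/subsetP => x.
  by rewrite !inE => /andP[].
set Z := (X :\: E) :|: D'.
have DT : D' \subset T.
  apply: (subset_trans sD'); apply/subsetP => x; by rewrite !inE => /and3P[].
have gZ : good Z.
  rewrite /good subUset DT andbT (subset_trans (subsetDl _ _) XT) /=.
  rewrite cardsU cardsD (setIidPr EX).
  have -> : (X :\: E) :&: D' = set0.
    apply/eqP; rewrite -subset0; apply/subsetP => x; rewrite !inE.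
    case/andP=> /andP[_ xX] xD.
    by move: DX; rewrite disjoint_subset => /subsetP/(_ x xD); rewrite inE xX.
  rewrite cards0; apply/eqP.
  have : #|E| <= #|X| by exact: subset_leq_card.
  lia.
have -> : 2 * j.+1 + 1 = 2 + (2 * j + 1) by lia.
apply: (@walk_cat 2 (2 * j + 1) _ Z).
  apply: walk2 => //.
  have : #|X :\: E| <= #|X :&: Z|.
    by apply: subset_leq_card; apply/subsetP => x; rewrite !inE => /andP[-> ->].
  rewrite cardsD (setIidPr EX); lia.
apply: IH => //.
have : (T :\: A) :\: Z \subset D :\: D'.
  apply/subsetP => x; rewrite !inE negb_or negb_and negbK.
  case/andP=> /andP[/orP[xE|xX] xD'] /andP[xA xT].
    by have := subsetP sE x xE; rewrite !inE (negbTE xA) andbF.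
  by rewrite xD' xX xA xT.
move/subset_leq_card; rewrite [#|D :\: D'|]cardsD (setIidPr sD'); lia.
Qed.
End W.

Lemma inter_card n t' r (T X Y : {set 'I_n}) : #|T| = t' + 2 * r ->
  X :|: Y = T -> #|X| = r + t' -> #|Y| = r + t' -> #|X :&: Y| = t'.
Proof. move=> HT U c1 c2; have := cardsUI X Y; rewrite U HT c1 c2; lia. Qed.

Theorem lemma4p4 (n t' r : nat) (T : {set 'I_n}) (A B : {set 'I_n}) :
  0 < n -> 0 < t' -> 0 < r ->
  #|T| = t' + 2 * r ->
  A \subset T -> #|A| = r + t' ->
  B \subset T -> #|B| = r + t' ->
  A != B ->
  let w := #|A :&: B| %/ t' + 1 in
  exists As : nat -> {set 'I_n},
    (forall i, 1 <= i <= 2 * w -> As i \subset T /\ #|As i| = r + t') /\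
    (forall i, 1 <= i <= 2 * w - 1 -> #|As i :&: As i.+1| = t') /\
    As 1 = B /\ As (2 * w) = A.
Proof.
move=> _ t0 _ HT AT cA BT cB _ /=.
have gA : good n t' r T A by rewrite /good AT cA eqxx.
have gB : good n t' r T B by rewrite /good BT cB eqxx.
set s := #|A :&: B|.
have Hd : #|(T :\: A) :\: B| <= (s %/ t') * t'.
  rewrite setDDl cardsD (setIidPr _); last by rewrite subUset AT BT.
  have := cardsUI A B; have := divn_eq s t'; have := ltn_pmod s t0.
  rewrite -/s HT cA cB; move: (s %/ t' * t') => q; lia.
have [As [A0 AL Ag As_]] := @reach n t' r T HT A gA (s %/ t') B gB Hd.
exists (fun i => As i.-1); split; [|split; [|split]].
- move=> i /andP[i1 i2]; have /andP[H1 H2] := Ag i.-1 ltac:(lia).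
  by split => //; apply/eqP.
- move=> i /andP[i1 i2] /=.
  have Hi : i.-1 < 2 * (s %/ t') + 1 by lia.
  have := As_ _ Hi; rewrite prednK //.
  have c1 : #|As i.-1| = r + t' by have /andP[_ /eqP] := Ag i.-1 (ltnW Hi).
  have c2 : #|As i| = r + t'.
    by have /andP[_ /eqP] := Ag i ltac:(rewrite -(prednK i1); exact: Hi).
  move=> U; exact: (@inter_card _ _ _ _ _ _ HT U c1 c2).
- exact: A0.
- by rewrite /= -AL; congr (As _); lia.
Qed.
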